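(* $\mathsf{COH}$ admits fairness preservation. That is, for all $A_0,A_1\subseteq2^{<\omega}$, every set $C$ fair for $A_0,A_1$, and every uniformly $C$-computable sequence $\vec R$, there is an $\vec R$-cohesive set $G$ with $G\oplus C$ fair for $A_0,A_1$.
   Context: An infinite set $G$ is $\vec R$-cohesive if for each $i$, $G\subseteq^* R_i$ or $G\subseteq^*\overline{R_i}$ (inclusion up to finitely many elements). Strings are finite binary strings, and $\preceq$ is the prefix relation. Two strings are incomparable if neither is a prefix of the other. Matrices. An $m$-by-$n$ matrix $M$ is an array of strings $\sigma_{i,j}$ ($i<m$, $j<n$), with rows $M(i)=(\sigma_{i,0},\dots,\sigma_{i,n-1})$. It is disjoint if each row consists of pairwise incomparable strings. Formulas. An $m$-by-$n$ formula is a formula with distinguished finite-set variables $U_{i,j}$. It is $\Sigma^{0,X}_1$ if it is $\Sigma^0_1$ relative to $X$. Valuations. An $M$-valuation is a tuple $V=(B_{i,j})$ of finite sets $B_{i,j}\subseteq\{\tau:\tau\succeq\sigma_{i,j}\}$. We write $\varphi(V)$ for $\varphi$ evaluated at $U_{i,j}:=B_{i,j}$, and $V(i)=(B_{i,0},\dots,B_{i,n-1})$. We write $V>s$ if all strings occurring in $V$ have length $>s$. Essential. $\varphi$ is essential in $M$ if for every $s$ there is an $M$-valuation $V>s$ with $\varphi(V)$. Diagonalization. An $M$-valuation $V$ diagonalizes against $A_0,A_1$ if for every $i<m$ there are components $L,R$ of $V(i)$ with $L\subseteq A_0$ and $R\subseteq A_1$. Fairness. For $n\ge1$, a set $X$ is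 $n$-fair for $A_0,A_1$ if the following holds: for every $m$, every $\Sigma^{0,X}_1$ $m$-by-$2^nm$ formula $\varphi$, and every $m$-by-$2^nm$ disjoint matrix $M$ in which $\varphi$ is essential, there is an $M$-valuation $V$ diagonalizing against $A_0,A_1$ with $\varphi(V)$. The set $X$ is fair if it is $n$-fair for some $n\ge1$. *)

(* Defs.v *)
From mathcomp Require Import all_boot.
Set Implicit Arguments. Unset Strict Implicit. Unset Printing Implicit Defensive.

Fixpoint unpair (n : nat) : nat * nat :=
  match n with
  | 0 => (0, 0)
  | k.+1 => let: (x, y) := unpair k in
            if x is x'.+1 then (x', y.+1) else (y.+1, 0)
  end.
Definition pair (x y : nat) : nat := ((x + y) * (x + y).+1) %/ 2 + y.

Inductive prf : Type :=
| pZero | pSucc | pFst | pSnd | pOracle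
| pComp (f g : prf)
| pPair (f g : prf)
| pRec (f g : prf)
| pMu (f : prf).

Inductive eval (X : nat -> bool) : prf -> nat -> nat -> Prop :=
| evZero x : eval X pZero x 0
| evSucc x : eval X pSucc x x.+1
| evFst x : eval X pFst x (unpair x).1
| evSnd x : eval X pSnd x (unpair x).2
| evOracle x : eval X pOracle x (nat_of_bool (X x))
| evComp f g x y z : eval X g x y -> eval X f y z -> eval X (pComp f g) x z
| evPair f g x y z : eval X f x y -> eval X g x z -> eval X (pPair f g) x (pair y z)
| evRec0 f g x a y : unpair x = (a, 0) -> eval X f a y -> eval X (pRec f g) x y
| evRecS f g x a k y z : unpair x = (a, k.+1) -> eval X (pRec f g) (pair a k) y ->
    eval X g (pair a (pair k y)) z -> eval X (pRec f g) x z
| evMu f x n : eval X f (pair x n) 0 ->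
    (forall k, k < n -> exists v, v <> 0 /\ eval X f (pair x k) v) ->
    eval X (pMu f) x n.

Definition join (G C : nat -> bool) : nat -> bool :=
  fun k => if odd k then C k./2 else G k./2.

Definition unif_computable (C : nat -> bool) (R : nat -> nat -> bool) : Prop :=
  exists e : prf, forall i x, eval C e (pair i x) (nat_of_bool (R i x)).

Definition infinite_set (G : nat -> bool) : Prop := forall N, exists n, N <= n /\ G n.

Definition subset_star (G S : nat -> bool) : Prop := exists N, forall n, N <= n -> G n -> S n.

Definition cohesive (R : nat -> nat -> bool) (G : nat -> bool) : Prop :=
  infinite_set G /\
  forall i, subset_star G (R i) \/ subset_star G (fun n => ~~ R i n).

Definition str := seq bool.
Definition incomparable (s t : str) : bool := ~~ prefix s t && ~~ prefix t s.

Definition smatrix (m n : nat) := 'I_m -> 'I_n -> str.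
Definition valuation (m n : nat) := 'I_m -> 'I_n -> seq str.

Definition disjoint_matrix m n (M : smatrix m n) : Prop :=
  forall (i : 'I_m) (j j' : 'I_n), j != j' -> incomparable (M i j) (M i j').

Definition is_valuation m n (M : smatrix m n) (V : valuation m n) : Prop :=
  forall i j t, t \in V i j -> prefix (M i j) t.

Definition val_gt m n (V : valuation m n) (s : nat) : Prop :=
  forall i j t, t \in V i j -> s < size t.

Fixpoint enc (s : seq nat) : nat :=
  if s is x :: s' then (pair x (enc s')).+1 else 0.
Definition code_str (t : str) : nat := enc (map nat_of_bool t).
(* canonical code of a finite set of strings *)
Definition code_set (B : seq str) : nat := enc (sort leq (undup (map code_str B))).
Definition code_val m n (V : valuation m n) : nat :=
  enc [seq enc [seq code_set (V i j) | j <- enum 'I_n] | i <- enum 'I_m].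

(* phi is a Sigma^{0,X}_1 m-by-n formula in the finite-set variables U_{i,j}
   (semantically: an X-c.e. property of the (canonically coded) valuation) *)
Definition sigma01 (X : nat -> bool) m n (phi : valuation m n -> Prop) : Prop :=
  exists e : prf, forall V, phi V <-> exists y, eval X e (code_val V) y.

Definition essential m n (phi : valuation m n -> Prop) (M : smatrix m n) : Prop :=
  forall s, exists V, is_valuation M V /\ val_gt V s /\ phi V.

Definition diagonalizes m n (V : valuation m n) (A0 A1 : str -> Prop) : Prop :=
  forall i : 'I_m, exists L R : 'I_n,
    (forall t, t \in V i L -> A0 t) /\ (forall t, t \in V i R -> A1 t).

Definition n_fair (n : nat) (X : nat -> bool) (A0 A1 : str -> Prop) : Prop :=
  forall (m : nat) (phi : valuation m (2 ^ n * m) -> Prop) (M : smatrix m (2 ^ n * m)),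
    sigma01 X phi -> disjoint_matrix M -> essential phi M ->
    exists V, is_valuation M V /\ diagonalizes V A0 A1 /\ phi V.

Definition fair (X : nat -> bool) (A0 A1 : str -> Prop) : Prop :=
  exists n, 1 <= n /\ n_fair n X A0 A1.

(* Main.v *)
Require Import Defs.
From mathcomp Require Import all_boot zify.
From Stdlib Require Import Classical ClassicalEpsilon FunctionalExtensionality.
Set Implicit Arguments. Unset Strict Implicit. Unset Printing Implicit Defensive.

Lemma pair_unpair k : pair (unpair k).1 (unpair k).2 = k.
Proof.
elim: k => [//|k IH] /=.
case E: (unpair k) IH => [x y]; rewrite /pair /=.
case: x E => [|x] E /= IH.
- rewrite addn0 -IH add0n addn0.
  have -> : (y.+1 * y.+2) = y.+1 * 2 + y * y.+1 by nia.
  by rewrite divnMDl //; lia.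
- rewrite -IH addnS addSn. by rewrite addnS.
Qed.

Lemma unpair_surj x y : exists k, unpair k = (x, y).
Proof.
suff H : forall s yy, yy <= s -> exists k, unpair k = (s - yy, yy).
  by have [k Hk] := H (x + y) y (leq_addl _ _); exists k; rewrite Hk addnK.
elim=> [|s IH] yy Hy.
  by exists 0; move: Hy; rewrite leqn0 => /eqP ->.
elim: yy Hy => [|yy IHy] Hy.
  have [k Hk] := IH s (leqnn s); exists k.+1; by rewrite /= Hk subnn subn0.
have [k Hk] := IHy (ltnW Hy); exists k.+1; rewrite /= Hk.
have -> : s.+1 - yy = (s.+1 - yy.+1).+1 by lia.
by [].
Qed.

Lemma unpair_pair x y : unpair (pair x y) = (x, y).
Proof.
have [k Hk] := unpair_surj x y.
have := pair_unpair k; rewrite Hk /= => ->; exact Hk.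
Qed.


Definition eval_ind2 (X : nat -> bool) (P : prf -> nat -> nat -> Prop)
  (hZ : forall x, P pZero x 0)
  (hS : forall x, P pSucc x x.+1)
  (hF : forall x, P pFst x (unpair x).1)
  (hSn : forall x, P pSnd x (unpair x).2)
  (hO : forall x, P pOracle x (nat_of_bool (X x)))
  (hC : forall f g x y z, eval X g x y -> P g x y -> eval X f y z -> P f y z -> P (pComp f g) x z)
  (hP : forall f g x y z, eval X f x y -> P f x y -> eval X g x z -> P g x z -> P (pPair f g) x (pair y z))
  (hR0 : forall f g x a y, unpair x = (a, 0) -> eval X f a y -> P f a y -> P (pRec f g) x y)
  (hRS : forall f g x a k y z, unpair x = (a, k.+1) -> eval X (pRec f g) (pair a k) y ->
      P (pRec f g) (pair a k) y ->
      eval X g (pair a (pair k y)) z -> P g (pair a (pair k y)) z -> P (pRec f g) x z)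
  (hM : forall f x n, eval X f (pair x n) 0 -> P f (pair x n) 0 ->
      (forall k, k < n -> exists v, v <> 0 /\ eval X f (pair x k) v /\ P f (pair x k) v) ->
      P (pMu f) x n) :
  forall e x y, eval X e x y -> P e x y :=
  fix F e x y (H : eval X e x y) {struct H} : P e x y :=
  match H in eval _ e x y return P e x y with
  | evZero x => hZ x
  | evSucc x => hS x
  | evFst x => hF x
  | evSnd x => hSn x
  | evOracle x => hO x
  | evComp f g x y z H1 H2 => hC _ _ _ _ _ H1 (F _ _ _ H1) H2 (F _ _ _ H2)
  | evPair f g x y z H1 H2 => hP _ _ _ _ _ H1 (F _ _ _ H1) H2 (F _ _ _ H2)
  | evRec0 f g x a y E H1 => hR0 _ _ _ _ _ E H1 (F _ _ _ H1)
  | evRecS f g x a k y z E H1 H2 => hRS _ _ _ _ _ _ _ E H1 (F _ _ _ H1) H2 (F _ _ _ H2)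
  | evMu f x n H1 H2 => hM _ _ _ H1 (F _ _ _ H1)
      (fun k Hk => match H2 k Hk with
                   | ex_intro v (conj Hv Hev) => ex_intro _ v (conj Hv (conj Hev (F _ _ _ Hev)))
                   end)
  end.

Lemma eval_det X e x y1 : eval X e x y1 -> forall y2, eval X e x y2 -> y1 = y2.
Proof.
move=> H; elim/eval_ind2: H => {e x y1}.
- by move=> x y2 H; inversion H.
- by move=> x y2 H; inversion H.
- by move=> x y2 H; inversion H.
- by move=> x y2 H; inversion H.
- by move=> x y2 H; inversion H.
- move=> f g x y z _ IHg _ IHf y2 H; inversion H; subst.
  match goal with H1 : eval X g x ?w, H2 : eval X f ?w y2 |- _ =>
    have := IHg _ H1 => ?; subst; exact: IHf end.
- move=> f g x y z _ IHf _ IHg y2 H; inversion H; subst.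
  match goal with H1 : eval X f x _, H2 : eval X g x _ |- _ =>
    by rewrite (IHf _ H1) (IHg _ H2) end.
- move=> f g x a y E _ IHf y2 H; inversion H; subst; rewrite E in H2.
  + case: H2 => ?; subst; exact: IHf.
  + by [].
- move=> f g x a k y z E _ IHr _ IHg y2 H; inversion H; subst; rewrite E in H2.
  + by [].
  + case: H2 => ??; subst.
    match goal with H1 : eval X (pRec f g) _ _, H4 : eval X g _ y2 |- _ =>
    have := IHr _ H1 => ?; subst; exact: IHg end.
- move=> f x n _ IH0 Hlt y2 H; inversion H; subst.
  case: (ltngtP n y2) => // Hc.
  + have [v [Hv Hv2]] := H2 _ Hc. by move: (IH0 _ Hv2) => E; rewrite -E in Hv.
  + have [v [Hv [_ IHk]]] := Hlt _ Hc. by move: (IHk _ H1) => E; rewrite E in Hv.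
Qed.

Lemma eval_use X e x y : eval X e x y ->
  exists u, forall X', (forall q, q < u -> X' q = X q) -> eval X' e x y.
Proof.
move=> H; elim/eval_ind2: H => {e x y}.
- by exists 0 => X' _; constructor.
- by exists 0 => X' _; constructor.
- by exists 0 => X' _; constructor.
- by exists 0 => X' _; constructor.
- move=> x; exists x.+1 => X' HX; rewrite -HX //; constructor.
- move=> f g x y z _ [u1 H1] _ [u2 H2]; exists (maxn u1 u2) => X' HX.
  apply: (evComp (y:=y)); [apply: H1 | apply: H2] => q Hq; apply: HX; lia.
- move=> f g x y z _ [u1 H1] _ [u2 H2]; exists (maxn u1 u2) => X' HX.
  apply: evPair; [apply: H1 | apply: H2] => q Hq; apply: HX; lia.
- move=> f g x a y E _ [u1 H1]; exists u1 => X' HX.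
  apply: evRec0 E _; exact: H1.
- move=> f g x a k y z E _ [u1 H1] _ [u2 H2]; exists (maxn u1 u2) => X' HX.
  apply: (evRecS (y:=y)) E _ _; [apply: H1 | apply: H2] => q Hq; apply: HX; lia.
- move=> f x n _ [u0 H0] Hlt.
  have : exists u, forall k, k < n -> exists v, v <> 0 /\
      forall X', (forall q, q < u -> X' q = X q) -> eval X' f (pair x k) v.
    elim: n {H0} Hlt => [|n IHn] Hlt; first by exists 0.
    have [u IH] := IHn (fun k Hk => Hlt k (ltnW Hk)).
    have [v [Hv [_ [u' Hu']]]] := Hlt n (ltnSn n).
    exists (maxn u u') => k Hk.
    case: (ltngtP k n) => Hkn.
    + have [v' [Hv' Hx]] := IH k Hkn; exists v'; split => // X' HX; apply: Hx => q Hq; apply: HX; lia.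
    + lia.
    + subst; exists v; split => // X' HX; apply: Hu' => q Hq; apply: HX; lia.
  move=> [u Hu]; exists (maxn u0 u) => X' HX; constructor.
  + apply: H0 => q Hq; apply: HX; lia.
  + move=> k Hk; have [v [Hv Hx]] := Hu k Hk; exists v; split => //; apply: Hx => q Hq; apply: HX; lia.
Qed.

Fixpoint mugo (h : nat -> option nat) (n fuel : nat) : option nat :=
  match fuel with
  | 0 => None
  | fuel'.+1 => match h n with
                | None => None
                | Some 0 => Some n
                | Some _ => mugo h n.+1 fuel'
                end
  end.

Fixpoint recB (fa : option nat) (gs : nat -> nat -> option nat) (k : nat) : option nat :=
  match k with
  | 0 => fa
  | k'.+1 => obind (gs k') (recB fa gs k')
  end.

Fixpoint evalB (O : nat -> bool) (s : nat) (e : prf) (x : nat) : option nat :=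
  match e with
  | pZero => Some 0
  | pSucc => Some x.+1
  | pFst => Some (unpair x).1
  | pSnd => Some (unpair x).2
  | pOracle => Some (nat_of_bool (O x))
  | pComp f g => obind (evalB O s f) (evalB O s g x)
  | pPair f g => match evalB O s f x, evalB O s g x with
                 | Some a, Some b => Some (pair a b)
                 | _, _ => None end
  | pRec f g => recB (evalB O s f (unpair x).1)
                   (fun k y => evalB O s g (pair (unpair x).1 (pair k y))) (unpair x).2
  | pMu f => mugo (fun n => evalB O s f (pair x n)) 0 s
  end.

Lemma mugo_sound h n fuel r : mugo h n fuel = Some r ->
  [/\ n <= r, h r = Some 0 & forall k, n <= k < r -> exists v, v <> 0 /\ h k = Some v].
Proof.
elim: fuel n => [//|fuel IH] n /=.
case E: (h n) => [[|v]|] //.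
- by case=> <-; split => // k; lia.
- move/IH => [H1 H2 H3]; split => //; first lia.
  move=> k Hk; case: (ltngtP n k) => Hnk; first (apply: H3; lia).
  + lia.
  + subst; by exists v.+1.
Qed.

Lemma evalB_rec_pair O s f g a k :
  evalB O s (pRec f g) (pair a k) =
  recB (evalB O s f a) (fun k y => evalB O s g (pair a (pair k y))) k.
Proof. by rewrite /= unpair_pair. Qed.

Lemma evalB_sound O s e x y : evalB O s e x = Some y -> eval O e x y.
Proof.
elim: e x y => [||||| f IHf g IHg | f IHf g IHg | f IHf g IHg | f IHf] x y /=.
- case=> <-; constructor.
- case=> <-; constructor.
- case=> <-; constructor.
- case=> <-; constructor.
- case=> <-; constructor.
- case E: (evalB O s g x) => [z|] //= H.
  apply: evComp (IHg _ _ E) (IHf _ _ H).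
- case E1: (evalB O s f x) => [a|] //; case E2: (evalB O s g x) => [b|] // [<-].
  exact: evPair (IHf _ _ E1) (IHg _ _ E2).
- rewrite -[in eval _ _ x](pair_unpair x).
  move: (unpair x).1 (unpair x).2 => a k.
  elim: k y => [|k IHk] y /= H.
  + apply: (@evRec0 _ _ g _ a); [by rewrite unpair_pair | exact: IHf].
  + move: H; case E: (recB _ _ k) => [z|] //= H.
    apply: (@evRecS _ _ _ _ a k z); first by rewrite unpair_pair.
    * exact: IHk.
    * exact: IHg.
- move/mugo_sound => [_ H2 H3]; constructor; first exact: IHf.
  move=> k Hk; have [v [Hv Hv']] := H3 k Hk; exists v; split => //; exact: IHf.
Qed.

Lemma mugo_complete h n : h n = Some 0 ->
  (forall k, k < n -> exists v, v <> 0 /\ h k = Some v) ->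
  forall fuel m, m <= n -> n < m + fuel -> mugo h m fuel = Some n.
Proof.
move=> Hn Hlt; elim=> [|fuel IH] m Hm Hf /=; first lia.
case: (ltngtP m n) => Hc.
- have [v [Hv ->]] := Hlt m Hc. case: v Hv => [//|v] _. apply: IH; lia.
- lia.
- by subst; rewrite Hn.
Qed.

Lemma evalB_complete O e x y : eval O e x y ->
  exists s0, forall s, s0 <= s -> evalB O s e x = Some y.
Proof.
move=> H; elim/eval_ind2: H => {e x y}.
- by exists 0.
- by exists 0.
- by exists 0.
- by exists 0.
- by exists 0.
- move=> f g x y z _ [s1 H1] _ [s2 H2]; exists (maxn s1 s2) => s Hs /=.
  rewrite H1 /=; [apply: H2|]; lia.
- move=> f g x y z _ [s1 H1] _ [s2 H2]; exists (maxn s1 s2) => s Hs /=.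
  rewrite H1 ?H2 //; lia.
- move=> f g x a y E _ [s1 H1]; exists s1 => s Hs /=.
  rewrite E /=; exact: H1.
- move=> f g x a k y z E _ [s1 H1] _ [s2 H2]; exists (maxn s1 s2) => s Hs /=.
  rewrite E /=. have := H1 s; rewrite evalB_rec_pair => ->; last lia.
  rewrite /= H2 //; lia.
- move=> f x n _ [s0 H0] Hlt.
  have : exists s1, forall k, k < n -> exists v, v <> 0 /\
      forall s, s1 <= s -> evalB O s f (pair x k) = Some v.
    elim: n {H0} Hlt => [|n IHn] Hlt; first by exists 0.
    have [u IH] := IHn (fun k Hk => Hlt k (ltnW Hk)).
    have [v [Hv [_ [u' Hu']]]] := Hlt n (ltnSn n).
    exists (maxn u u') => k Hk.
    case: (ltngtP k n) => Hkn.
    + have [v' [Hv' Hx]] := IH k Hkn; exists v'; split => // s Hs; apply: Hx; lia.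
    + lia.
    + subst; exists v; split => // s Hs; apply: Hu'; lia.
  move=> [s1 Hs1]; exists (maxn (maxn s0 s1) n.+1) => s Hs /=.
  apply: mugo_complete => //; last lia.
  + apply: H0; lia.
  + move=> k Hk; have [v [Hv Hx]] := Hs1 k Hk; exists v; split => //; apply: Hx; lia.
Qed.

Lemma ev_eq X e x y y' : eval X e x y -> y = y' -> eval X e x y'.
Proof. by move=> H <-. Qed.

Definition pId := pPair pFst pSnd.
Lemma ev_id X x : eval X pId x x.
Proof. apply: ev_eq (evPair (evFst X x) (evSnd X x)) _; exact: pair_unpair. Qed.

Fixpoint pConst c := if c is c'.+1 then pComp pSucc (pConst c') else pZero.
Lemma ev_const X c x : eval X (pConst c) x c.
Proof. elim: c => [|c IH] /=; [constructor | exact: evComp IH (evSucc _ _)]. Qed.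

Lemma ev_comp X f g x y z : eval X g x y -> eval X f y z -> eval X (pComp f g) x z.
Proof. exact: evComp. Qed.

Lemma ev_pair X f g x y z : eval X f x y -> eval X g x z -> eval X (pPair f g) x (pair y z).
Proof. exact: evPair. Qed.

Lemma ev_fst X x y : eval X pFst (pair x y) x.
Proof. apply: ev_eq (evFst X _) _; by rewrite unpair_pair. Qed.
Lemma ev_snd X x y : eval X pSnd (pair x y) y.
Proof. apply: ev_eq (evSnd X _) _; by rewrite unpair_pair. Qed.

Lemma ev_rec X f g a (F : nat -> nat) :
  eval X f a (F 0) -> (forall k, eval X g (pair a (pair k (F k))) (F k.+1)) ->
  forall k, eval X (pRec f g) (pair a k) (F k).
Proof.
move=> H0 HS; elim=> [|k IH].
- apply: (@evRec0 _ _ g _ a) H0; by rewrite unpair_pair.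
- apply: (@evRecS _ _ _ _ a k (F k)) IH (HS k); by rewrite unpair_pair.
Qed.

Definition pCond := pRec pZero pFst.
Lemma ev_cond X v r : eval X pCond (pair v r) (if r is 0 then 0 else v).
Proof.
apply: (ev_rec (F := fun r => if r is 0 then 0 else v)); first constructor.
move=> k; exact: ev_fst.
Qed.

Definition pPred := pComp (pRec pZero (pComp pFst pSnd)) (pPair pZero pId).
Lemma ev_pred X x : eval X pPred x x.-1.
Proof.
apply: ev_comp (ev_pair (evZero _ _) (ev_id _ _)) _.
apply: (ev_rec (F := predn)); first constructor.
move=> k; apply: ev_comp (ev_snd _ _ _) (ev_fst _ _ _).
Qed.

Definition pSub := pRec pId (pComp pPred (pComp pSnd pSnd)).
Lemma ev_sub X a b : eval X pSub (pair a b) (a - b).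
Proof.
apply: (ev_rec (F := fun b => a - b)); first by rewrite subn0; exact: ev_id.
move=> k; apply: ev_comp (ev_comp (ev_snd _ _ _) (ev_snd _ _ _)) _.
apply: ev_eq (ev_pred _ _) _; lia.
Qed.

Definition pAdd := pRec pId (pComp pSucc (pComp pSnd pSnd)).
Lemma ev_add X a b : eval X pAdd (pair a b) (a + b).
Proof.
apply: (ev_rec (F := fun b => a + b)); first by rewrite addn0; exact: ev_id.
move=> k; apply: ev_comp (ev_comp (ev_snd _ _ _) (ev_snd _ _ _)) _.
apply: ev_eq (evSucc _ _) _; lia.
Qed.

(* half via mu: least h with (q - (h+h)).-1 = 0 *)
Definition pHalf :=
  pMu (pComp pPred (pComp pSub (pPair pFst (pComp pAdd (pPair pSnd pSnd))))).
Lemma ev_half_test X q h :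
  eval X (pComp pPred (pComp pSub (pPair pFst (pComp pAdd (pPair pSnd pSnd))))) (pair q h)
    (q - (h + h)).-1.
Proof.
apply: ev_comp (ev_pred _ _).
apply: ev_comp (ev_sub _ _ _).
apply: ev_pair; first exact: ev_fst.
apply: ev_comp (ev_add _ _ _).
apply: ev_pair; exact: ev_snd.
Qed.

Lemma ev_half X q : eval X pHalf q q./2.
Proof.
constructor.
- apply: ev_eq (ev_half_test _ _ _) _.
  have := odd_double_half q; rewrite -addnn; case: (odd q) => /= H; lia.
- move=> k Hk; exists (q - (k + k)).-1; split; last exact: ev_half_test.
  have := odd_double_half q; rewrite -addnn; lia.
Qed.

Definition pPar := pComp pSub (pPair pId (pComp pAdd (pPair pHalf pHalf))).
Lemma ev_par X q : eval X pPar q (odd q).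
Proof.
apply: ev_eq.
  apply: (ev_comp _ (ev_sub _ q (q./2 + q./2))).
  apply: ev_pair; first exact: ev_id.
  apply: ev_comp (ev_add _ _ _); apply: ev_pair; exact: ev_half.
have := odd_double_half q; rewrite -addnn; case: (odd q) => /=; lia.
Qed.

Definition pOr := pComp (pRec pId (pConst 1)) (pPair pSnd pFst).
Lemma ev_or X a b : eval X pOr (pair a b) (if a is 0 then b else 1).
Proof.
apply: ev_comp (ev_pair (ev_snd _ _ _) (ev_fst _ _ _)) _.
apply: (ev_rec (F := fun a => if a is 0 then b else 1)); first exact: ev_id.
move=> k; exact: ev_const.
Qed.

Definition pAnd := pComp pCond (pPair pSnd pFst).
Lemma ev_and X a b : eval X pAnd (pair a b) (if a is 0 then 0 else b).
Proof.
apply: ev_comp (ev_pair (ev_snd _ _ _) (ev_fst _ _ _)) _; exact: ev_cond.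
Qed.

Definition pNot := pComp pSub (pPair (pConst 1) pId).
Lemma ev_not X a : eval X pNot a (1 - a).
Proof. apply: ev_comp (ev_pair (ev_const _ _ _) (ev_id _ _)) _; exact: ev_sub. Qed.

Definition streamv t r := (unpair (iter r (fun z => (unpair z).2) t)).1.
Definition pStream := pComp pFst (pRec pId (pComp pSnd (pComp pSnd pSnd))).
Lemma ev_stream X t r : eval X pStream (pair t r) (streamv t r).
Proof.
apply: (ev_comp _ (evFst X _)).
apply: (ev_rec (F := fun r => iter r (fun z => (unpair z).2) t)); first exact: ev_id.
move=> k; apply: ev_comp (ev_comp (ev_snd _ _ _) (ev_snd _ _ _)) _.
exact: evSnd.
Qed.

Lemma stream_repr (bs : seq bool) : exists t, forall r, (streamv t r != 0) = nth false bs r.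
Proof.
elim: bs => [|b bs [t Ht]].
- exists 0 => r; rewrite nth_nil /streamv.
  suff -> : iter r (fun z => (unpair z).2) 0 = 0 by [].
  by elim: r => //= r ->.
- exists (pair b t) => [[|r]].
  + by rewrite /streamv /= unpair_pair; case: b.
  + by rewrite /streamv iterSr /= unpair_pair -Ht.
Qed.

Definition enc_opt (o : option nat) := if o is Some y then y.+1 else 0.

Definition cRecG (g' : prf) :=
  pComp pCond (pPair (pComp g' (pPair (pComp pFst pFst) (pPair (pComp pSnd pFst)
     (pPair (pComp pFst pSnd) (pComp pPred (pComp pSnd pSnd)))))) (pComp pSnd pSnd)).
Definition cMuV (f' : prf) := pComp f' (pPair (pComp pFst pFst) (pPair (pComp pSnd pFst) pSnd)).
Definition cMuS := pComp pSub (pPair (pComp pFst (pComp pFst pFst)) pSnd).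
Definition cMuN (f' : prf) := pMu (pComp pCond (pPair (pComp pPred (cMuV f')) cMuS)).
Definition cMu (f' : prf) :=
  let u0 := pPair pId (cMuN f') in
  pComp pCond (pPair (pComp pCond (pPair (pComp pSucc (cMuN f')) (pComp (cMuV f') u0)))
                     (pComp cMuS u0)).

Fixpoint compile (Op : prf) (e : prf) : prf :=
  match e with
  | pZero => pConst 1
  | pSucc => pComp pSucc (pComp pSucc pSnd)
  | pFst => pComp pSucc (pComp pFst pSnd)
  | pSnd => pComp pSucc (pComp pSnd pSnd)
  | pOracle => pComp pSucc Op
  | pComp f g => let f' := compile Op f in let g' := compile Op g in
      pComp pCond (pPair (pComp f' (pPair pFst (pComp pPred g'))) g')
  | pPair f g => let f' := compile Op f in let g' := compile Op g in
      pComp pCond (pPair (pComp pCond (pPair (pComp pSucc (pPair (pComp pPred f') (pComp pPred g'))) g')) f')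
  | pRec f g => let f' := compile Op f in let g' := compile Op g in
      pComp (pRec f' (cRecG g')) (pPair (pPair pFst (pComp pFst pSnd)) (pComp pSnd pSnd))
  | pMu f => cMu (compile Op f)
  end.

Lemma mugo_min h s n0 : n0 <= s ->
  (forall k, k < n0 -> exists v, v <> 0 /\ h k = Some v) ->
  (n0 < s -> h n0 = None \/ h n0 = Some 0) ->
  mugo h 0 s = if n0 < s then (if h n0 is Some 0 then Some n0 else None) else None.
Proof.
move=> Hs Hlt Hn0.
suff H : forall fuel m, m <= n0 -> m + fuel = s ->
  mugo h m fuel = if n0 < s then (if h n0 is Some 0 then Some n0 else None) else None.
  exact: H.
elim=> [|fuel IH] m Hm Hf /=.
- have -> : n0 < s = false by lia. by [].
- case: (ltngtP m n0) => Hc.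
  + have [v [Hv ->]] := Hlt m Hc. case: v Hv => [//|v] _. apply: IH; lia.
  + lia.
  + subst m. have -> : n0 < s by lia.
    have [->|->] := Hn0 ltac:(lia); by [].
Qed.

Lemma compile_ok X Op (Of : nat -> nat -> bool)
  (HO : forall p x, eval X Op (pair p x) (Of p x)) e :
  forall p x, eval X (compile Op e) (pair p x) (enc_opt (evalB (Of p) (unpair p).1 e x)).
Proof.
elim: e => [||||| f IHf g IHg | f IHf g IHg | f IHf g IHg | f IHf] p x /=.
- exact: (ev_const X 1 (pair p x)).
- apply: ev_comp (evSucc _ _). apply: ev_comp (ev_snd _ _ _) (evSucc _ _).
- apply: ev_comp (evSucc _ _). apply: ev_comp (ev_snd _ _ _) (evFst _ _).
- apply: ev_comp (evSucc _ _). apply: ev_comp (ev_snd _ _ _) (evSnd _ _).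
- apply: ev_comp (evSucc _ _). exact: HO.
- apply: ev_eq.
    apply: ev_comp (ev_cond _ _ _).
    apply: ev_pair (IHg p x).
    apply: ev_comp (IHf p _).
    apply: ev_pair (ev_fst _ _ _) _.
    apply: ev_comp (IHg p x) (ev_pred _ _).
  by case: (evalB _ _ g x).
- apply: ev_eq.
    apply: ev_comp (ev_cond _ _ _).
    apply: ev_pair (IHf p x).
    apply: ev_comp (ev_cond _ _ _).
    apply: ev_pair (IHg p x).
    apply: ev_comp (evSucc _ _).
    apply: ev_pair; apply: ev_comp (ev_pred _ _); [exact: IHf | exact: IHg].
  by case: (evalB _ _ f x); case: (evalB _ _ g x).
- apply: ev_comp.
    apply: ev_pair; first (apply: ev_pair; [exact: ev_fst | apply: ev_comp (ev_snd _ _ _) (evFst _ _)]).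
    apply: ev_comp (ev_snd _ _ _) (evSnd _ _).
  apply: (ev_rec (F := fun k => enc_opt (recB (evalB (Of p) (unpair p).1 f (unpair x).1)
     (fun k y => evalB (Of p) (unpair p).1 g (pair (unpair x).1 (pair k y))) k))).
    exact: IHf.
  move=> k /=.
  apply: ev_eq.
    apply: ev_comp (ev_cond _ _ _).
    apply: ev_pair; last apply: ev_comp (ev_snd _ _ _) (ev_snd _ _ _).
    apply: ev_comp (IHg p _).
    apply: ev_pair; first apply: ev_comp (ev_fst _ _ _) (ev_fst _ _ _).
    apply: ev_pair; first apply: ev_comp (ev_fst _ _ _) (ev_snd _ _ _).
    apply: ev_pair; first apply: ev_comp (ev_snd _ _ _) (ev_fst _ _ _).
    apply: ev_comp (ev_pred _ _).
    apply: ev_comp (ev_snd _ _ _) (ev_snd _ _ _).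
  by case: (recB _ _ k).
-
  set s := (unpair p).1.
  set h := fun n => evalB (Of p) s f (pair x n).
  have HV : forall n, eval X (cMuV (compile Op f)) (pair (pair p x) n) (enc_opt (h n)).
    move=> n; rewrite /cMuV; apply: ev_comp (IHf p _).
    apply: ev_pair; first apply: ev_comp (ev_fst _ _ _) (ev_fst _ _ _).
    apply: ev_pair; [apply: ev_comp (ev_fst _ _ _) (ev_snd _ _ _) | exact: ev_snd].
  have HS : forall n, eval X cMuS (pair (pair p x) n) (s - n).
    move=> n; rewrite /cMuS; apply: ev_comp (ev_sub _ _ _).
    apply: ev_pair; last exact: ev_snd.
    apply: (ev_comp _ (evFst X p)).
    apply: ev_comp (ev_fst _ _ _) (ev_fst _ _ _).
  have HT : forall n, eval X (pComp pCond (pPair (pComp pPred (cMuV (compile Op f))) cMuS))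
      (pair (pair p x) n) (if s - n is 0 then 0 else (enc_opt (h n)).-1).
    move=> n; apply: ev_comp (ev_cond _ _ _).
    apply: ev_pair (HS n). apply: ev_comp (HV n) (ev_pred _ _).
  have Pex : exists n, (s - n == 0) || (enc_opt (h n) <= 1) by exists s; rewrite subnn.
  case: (ex_minnP Pex) => n0 Hn0 Hmin.
  have HN : eval X (cMuN (compile Op f)) (pair p x) n0.
    constructor.
    + apply: ev_eq (HT n0) _; move: Hn0; case: (s - n0) => //= _; case: (h n0) => [[|v]|] //=.
    + move=> k Hk; exists (if s - k is 0 then 0 else (enc_opt (h k)).-1); split; last exact: HT.
      case Ek: ((s - k == 0) || (enc_opt (h k) <= 1)); first by have := Hmin k Ek; lia.
      move: Ek; case: (s - k) => //= _; case: (h k) => [[|v]|] //=.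
  have Hn0s : n0 <= s by apply: Hmin; rewrite subnn.
  apply: ev_eq.
    rewrite /cMu /=.
    apply: ev_comp (ev_cond _ _ _).
    apply: ev_pair; last first.
      apply: ev_comp (HS n0). exact: ev_pair (ev_id _ _) HN.
    apply: ev_comp (ev_cond _ _ _).
    apply: ev_pair; first exact: ev_comp HN (evSucc _ _).
    apply: ev_comp (HV n0). exact: ev_pair (ev_id _ _) HN.
  rewrite (@mugo_min h s n0) //.
  + case: ltnP => Hc.
    * have -> : s - n0 = (s - n0).-1.+1 by lia.
      move: Hn0; have -> : s - n0 == 0 = false by lia.
      by case: (h n0) => [[|v]|].
    * by have -> : s - n0 = 0 by lia.
  + move=> k Hk. case Ek: ((s - k == 0) || (enc_opt (h k) <= 1)); first by have := Hmin k Ek; lia.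
    move: Ek; case: (h k) => [v|] /=; last by rewrite orbT.
    by rewrite orbC ltnS; case: v => // v _; exists v.+1.
  + move=> Hc; move: Hn0; have -> : s - n0 == 0 = false by lia.
    by case: (h n0) => [[|v]|]; auto.
Qed.

Definition Gt (t0 : nat) (X : nat -> bool) (t : nat) (r : nat) : bool :=
  (streamv t0 r != 0) || ((streamv t r != 0) && X r).

Definition mkOp (t0 : nat) (fX : prf) : prf :=
  let half := pComp pHalf pSnd in
  let par := pComp pPar pSnd in
  let cbit := pComp pOracle half in
  let t := pComp pSnd pFst in
  let Fbit := pComp pStream (pPair (pConst t0) half) in
  let sbit := pComp pStream (pPair t half) in
  let Xbit := pComp fX half in
  let gbit := pComp pOr (pPair Fbit (pComp pAnd (pPair sbit Xbit))) in
  pComp pOr (pPair (pComp pAnd (pPair par cbit)) (pComp pAnd (pPair (pComp pNot par) gbit))).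

Lemma ev_Op C t0 (X : nat -> bool) fX (HX : forall q, eval C fX q (X q)) p q :
  eval C (mkOp t0 fX) (pair p q) (join (Gt t0 X (unpair p).2) C q).
Proof.
have Hh : eval C (pComp pHalf pSnd) (pair p q) q./2 by apply: ev_comp (ev_snd _ _ _) (ev_half _ _).
have Hp : eval C (pComp pPar pSnd) (pair p q) (odd q) by apply: ev_comp (ev_snd _ _ _) (ev_par _ _).
apply: ev_eq.
  apply: ev_comp (ev_or _ _ _).
  apply: ev_pair.
    apply: ev_comp (ev_and _ _ _). apply: ev_pair Hp _. apply: ev_comp Hh (evOracle _ _).
  apply: ev_comp (ev_and _ _ _). apply: ev_pair; first by apply: ev_comp Hp (ev_not _ _).
  apply: ev_comp (ev_or _ _ _). apply: ev_pair.
    apply: ev_comp (ev_stream _ _ _). apply: ev_pair (ev_const _ _ _) Hh.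
  apply: ev_comp (ev_and _ _ _). apply: ev_pair.
    apply: ev_comp (ev_stream _ _ _). apply: ev_pair Hh. apply: ev_comp (ev_fst _ _ _) (evSnd _ _).
  apply: ev_comp Hh (HX _).
rewrite /join /Gt; case: (odd q) => /=; first by case: (C q./2).
by case: (streamv t0 q./2) => [|?] /=; case: (streamv (unpair p).2 q./2) => [|?] /=; case: (X _).
Qed.

Definition PsiP (t0 : nat) (fX : prf) (e : prf) :=
  pMu (pComp pNot (pComp (compile (mkOp t0 fX) e) (pPair pSnd pFst))).

Lemma psi_iff C t0 (X : nat -> bool) fX (HX : forall q, eval C fX q (X q)) e x :
  (exists y, eval C (PsiP t0 fX e) x y) <->
  (exists t z, eval (join (Gt t0 X t) C) e x z).
Proof.
have Hc := compile_ok (ev_Op t0 HX) e.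
pose tv k := 1 - enc_opt (evalB (join (Gt t0 X (unpair k).2) C) (unpair k).1 e x).
have Ht : forall k, eval C (pComp pNot (pComp (compile (mkOp t0 fX) e) (pPair pSnd pFst))) (pair x k) (tv k).
  move=> k; apply: ev_comp (ev_not _ _).
  apply: ev_comp (Hc k x). apply: ev_pair (ev_snd _ _ _) (ev_fst _ _ _).
split.
- move=> [y Hy]; inversion Hy; subst.
  have := eval_det H0 (Ht y); rewrite /tv.
  case E: (evalB _ _ e x) => [z|] //= _.
  by exists (unpair y).2, z; exact: evalB_sound E.
- move=> [t [z Hz]].
  have [s0 Hs0] := evalB_complete Hz.
  have Pex : exists k, tv k == 0.
    exists (pair s0 t); by rewrite /tv unpair_pair /= Hs0.
  case: (ex_minnP Pex) => k /eqP Hk Hmin.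
  exists k; constructor; first by rewrite -Hk; exact: Ht.
  move=> j Hj; exists (tv j); split; last exact: Ht.
  move=> E; have := Hmin j; rewrite E eqxx => /(_ isT); lia.
Qed.

Record cond := Cond { cF : nat -> bool; cX : nat -> bool; ck : nat }.
Definition decC (C : nat -> bool) (X : nat -> bool) := exists f, forall q, eval C f q (X q).
Definition valid C c := [/\ (forall q, cF c q -> q < ck c), (forall q, cX c q -> ck c <= q),
  infinite_set (cX c) & decC C (cX c)].
Definition ext c c' := [/\ (forall q, cF c q -> cF c' q), (forall q, cF c' q -> cF c q \/ cX c q),
  (forall q, cX c' q -> cX c q) & ck c <= ck c'].
Definition agrees (G : nat -> bool) c := (forall q, cF c q -> G q) /\ (forall q, G q -> cF c q \/ cX c q).

Lemma ext_refl c : ext c c.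
Proof. split => // q; auto. Qed.

Lemma ext_trans c1 c2 c3 : ext c1 c2 -> ext c2 c3 -> ext c1 c3.
Proof.
move=> [a1 b1 c1' d1] [a2 b2 c2' d2]; split; auto.
- move=> q /b2 [/b1|/c1']; auto.
- lia.
Qed.

Lemma agrees_ext G c c' : ext c c' -> agrees G c' -> agrees G c.
Proof.
move=> [a b c1 d] [h1 h2]; split; auto.
move=> q /h2 [/b|/c1]; auto.
Qed.

Lemma decC_ge C X U : decC C X -> decC C (fun q => X q && (U <= q)).
Proof.
move=> [f Hf]; exists (pComp pAnd (pPair f (pComp pNot (pComp pSub (pPair (pConst U) pId))))) => q.
apply: ev_eq.
  apply: ev_comp (ev_and _ _ _). apply: ev_pair (Hf q) _.
  apply: ev_comp (ev_not _ _). apply: ev_comp (ev_sub _ _ _). exact: ev_pair (ev_const _ _ _) (ev_id _ _).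
case: (X q) => //=; case: leqP => /= H; lia.
Qed.

Lemma decC_R C X (R : nat -> nat -> bool) eR i b :
  (forall i x, eval C eR (pair i x) (R i x)) ->
  decC C X -> decC C (fun q => X q && (R i q == b)).
Proof.
move=> HR [f Hf].
have Hr : forall q, eval C (pComp eR (pPair (pConst i) pId)) q (R i q).
  move=> q; apply: ev_comp (HR i q). exact: ev_pair (ev_const _ _ _) (ev_id _ _).
case: b.
- exists (pComp pAnd (pPair f (pComp eR (pPair (pConst i) pId)))) => q.
  apply: ev_eq. apply: ev_comp (ev_and _ _ _). exact: ev_pair (Hf q) (Hr q).
  by case: (X q); case: (R i q).
- exists (pComp pAnd (pPair f (pComp pNot (pComp eR (pPair (pConst i) pId))))) => q.
  apply: ev_eq. apply: ev_comp (ev_and _ _ _). apply: ev_pair (Hf q) _. exact: ev_comp (Hr q) (ev_not _ _).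
  by case: (X q); case: (R i q).
Qed.

Lemma join_agree G G' C u : (forall r, r < u -> G r = G' r) ->
  forall p, p < u -> join G C p = join G' C p.
Proof.
move=> H p Hp; rewrite /join; case: (odd p) => //; apply: H.
have := odd_double_half p; rewrite -addnn; lia.
Qed.

Lemma infinite_inter X Y : infinite_set X -> infinite_set (fun q => X q && Y q) \/ infinite_set (fun q => X q && ~~ Y q).
Proof.
move=> HX; case: (classic (infinite_set (fun q => X q && Y q))) => H; first by left.
right => N.
have [N0 HN0] : exists N0, forall q, N0 <= q -> X q -> ~~ Y q.
  apply: NNPP => Hn; apply: H => M.
  apply: NNPP => Hm; apply: Hn; exists M => q Hq HXq.
  apply/negP => HY; apply: Hm; exists q; by rewrite HXq HY.
have [q [Hq HXq]] := HX (maxn N N0).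
exists q; split; first lia. by rewrite HXq HN0 //; lia.
Qed.

Lemma dense_inf C c N : valid C c -> exists c', valid C c' /\ ext c c' /\ exists q, N <= q /\ cF c' q.
Proof.
move=> [h1 h2 h3 h4].
have [q [Hq HXq]] := h3 (maxn N (ck c)).
exists (Cond (fun r => cF c r || (r == q)) (fun r => cX c r && (q.+1 <= r)) q.+1).
split; [split|split; [split|]] => /=.
- move=> r /orP [/h1|/eqP ->]; lia.
- by move=> r /andP [].
- move=> M; have [r [Hr HXr]] := h3 (maxn M q.+1); exists r; split; first lia.
  rewrite HXr /=; lia.
- exact: decC_ge.
- by move=> r ->.
- move=> r /orP [->|/eqP ->]; auto.
- by move=> r /andP [].
- have := h2 q HXq; lia.
- exists q; rewrite eqxx orbT; split => //; lia.
Qed.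

Lemma dense_coh C (R : nat -> nat -> bool) eR c i :
  (forall i x, eval C eR (pair i x) (R i x)) -> valid C c ->
  exists c', valid C c' /\ ext c c' /\
    ((forall q, ck c' <= q -> cX c' q -> R i q) \/ (forall q, ck c' <= q -> cX c' q -> ~~ R i q)).
Proof.
move=> HR [h1 h2 h3 h4].
case: (infinite_inter (R i) h3) => Hinf.
- exists (Cond (cF c) (fun q => cX c q && (R i q == true)) (ck c)).
  split; [split|split; [split|]] => //=.
  + by move=> q /andP [/h2].
  + by move=> M; have [q [Hq /andP [H1 H2]]] := Hinf M; exists q; rewrite H1 H2.
  + exact: decC_R.
  + move=> q; auto.
  + by move=> q /andP [].
  + by left => q _ /andP [_ /eqP].
- exists (Cond (cF c) (fun q => cX c q && (R i q == false)) (ck c)).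
  split; [split|split; [split|]] => //=.
  + by move=> q /andP [/h2].
  + by move=> M; have [q [Hq /andP [H1 H2]]] := Hinf M; exists q; rewrite H1 /=; case: (R i q) H2.
  + exact: decC_R.
  + move=> q; auto.
  + by move=> q /andP [].
  + by right => q _ /andP [_ /eqP ->].
Qed.

Definition FR C (A0 A1 : str -> Prop) m N (e : prf) (M : smatrix m N) c :=
  disjoint_matrix M ->
  (exists V, is_valuation M V /\ diagonalizes V A0 A1 /\
     forall G, agrees G c -> exists y, eval (join G C) e (code_val V) y) \/
  (exists s, forall G, agrees G c -> forall V, is_valuation M V -> val_gt V s ->
     forall y, ~ eval (join G C) e (code_val V) y).

Lemma FR_ext C A0 A1 m N e (M : smatrix m N) c c' : ext c c' -> FR C A0 A1 e M c -> FR C A0 A1 e M c'.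
Proof.
move=> He H Hd; case: (H Hd) => [[V [h1 [h2 h3]]]|[s Hs]].
- left; exists V; split => //; split => // G HG; apply: h3; exact: agrees_ext HG.
- right; exists s => G HG; apply: Hs; exact: agrees_ext HG.
Qed.

Lemma F_repr C c : valid C c -> exists t0, forall r, (streamv t0 r != 0) = cF c r.
Proof.
move=> [h1 _ _ _].
have [t0 Ht0] := stream_repr [seq cF c q | q <- iota 0 (ck c)].
exists t0 => r; rewrite Ht0.
case: (ltnP r (ck c)) => Hr.
- by rewrite (nth_map 0) ?size_iota // nth_iota.
- rewrite nth_default ?size_map ?size_iota //.
  by case E: (cF c r) => //; have := h1 r E; lia.
Qed.

Lemma dense_fair C A0 A1 n (Hfair : n_fair n C A0 A1) c m e (M : smatrix m (2 ^ n * m)) :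
  valid C c -> exists c', valid C c' /\ ext c c' /\ FR C A0 A1 e M c'.
Proof.
move=> Hv; have [t0 Ht0] := F_repr Hv.
move: (Hv) => [h1 h2 h3 [fX HX]].
case: (classic (disjoint_matrix M)) => Hd; last first.
  by exists c; split => //; split; [exact: ext_refl | move=> /Hd].
pose psi := fun V : valuation m (2 ^ n * m) => exists y, eval C (PsiP t0 fX e) (code_val V) y.
case: (classic (essential psi M)) => Hess.
- have Hsig : sigma01 C psi by exists (PsiP t0 fX e).
  have [V [HvV [Hdiag Hpsi]]] := Hfair m psi M Hsig Hd Hess.
  have [t [z Hz]] := (psi_iff t0 HX e (code_val V)).1 Hpsi.
  have [u Hu] := eval_use Hz.
  pose U := maxn (ck c) u.
  exists (Cond (fun q => Gt t0 (cX c) t q && (q < U)) (fun q => cX c q && (U <= q)) U).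
  split; [split|split; [split|]] => /=.
  + by move=> q /andP [].
  + by move=> q /andP [].
  + move=> N; have [r [Hr HXr]] := h3 (maxn N U); exists r; split; first lia.
    rewrite HXr /=; lia.
  + apply: decC_ge; by exists fX.
  + move=> q Hq; rewrite /Gt Ht0 Hq /=; have := h1 q Hq; lia.
  + move=> q /andP [Hg _]; move: Hg; rewrite /Gt Ht0 => /orP [->|/andP [_ ->]]; auto.
  + by move=> q /andP [].
  + lia.
  + move=> _; left; exists V; split => //; split => // G [HG1 HG2].
    exists z; apply: Hu => q Hq; apply: join_agree Hq => r Hr.
    case E: (Gt t0 (cX c) t r).
    * apply: HG1 => /=; rewrite E /=; lia.
    * case E2: (G r) => //; case: (HG2 r E2) => /=; first by rewrite E.
      move=> /andP [_ H]; lia.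
- have [s Hs] : exists s, ~ exists V, [/\ is_valuation M V, val_gt V s & psi V].
    apply: NNPP => H; apply: Hess => s; apply: NNPP => H'; apply: H; exists s => [[V [a b c']]].
    by apply: H'; exists V.
  exists c; split => //; split; first exact: ext_refl.
  move=> _; right; exists s => G [HG1 HG2] V HvV Hgt y Hy.
  have [u Hu] := eval_use Hy.
  have [t Ht] := stream_repr [seq G r | r <- iota 0 u].
  apply: Hs; exists V; split => //.
  apply/(psi_iff t0 HX e (code_val V)); exists t, y.
  apply: Hu => q Hq; apply: join_agree Hq => r Hr.
  rewrite /Gt Ht0 Ht (nth_map 0) ?size_iota // nth_iota // add0n.
  case E: (G r); case E2: (cF c r) => //=.
  + by case: (HG2 r E) => [|->]; [rewrite E2|].
  + by rewrite (HG1 r E2) in E.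
Qed.

Fixpoint prf_tree (e : prf) : GenTree.tree nat :=
  match e with
  | pZero => GenTree.Node 0 [::]
  | pSucc => GenTree.Node 1 [::]
  | pFst => GenTree.Node 2 [::]
  | pSnd => GenTree.Node 3 [::]
  | pOracle => GenTree.Node 4 [::]
  | pComp f g => GenTree.Node 5 [:: prf_tree f; prf_tree g]
  | pPair f g => GenTree.Node 6 [:: prf_tree f; prf_tree g]
  | pRec f g => GenTree.Node 7 [:: prf_tree f; prf_tree g]
  | pMu f => GenTree.Node 8 [:: prf_tree f]
  end.

Lemma prf_tree_inj : injective prf_tree.
Proof.
elim=> [||||| f IHf g IHg | f IHf g IHg | f IHf g IHg | f IHf] [||||| f' g' | f' g' | f' g' | f'] //= [];
  try (by move=> /IHf ->); by move=> /IHf -> /IHg ->.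
Qed.

Definition table m N (M : smatrix m N) : seq (seq str) :=
  [seq [seq M i j | j <- enum 'I_N] | i <- enum 'I_m].

Lemma table_inj m N (M M' : smatrix m N) : table M = table M' -> M = M'.
Proof.
move=> H; apply: functional_extensionality => i; apply: functional_extensionality => j.
have E : forall M0 : smatrix m N, M0 i j = nth [::] (nth [::] (table M0) i) j.
  move=> M0; rewrite /table (nth_map i) ?size_enum_ord ?ltn_ord // nth_ord_enum.
  by rewrite (nth_map j) ?size_enum_ord ?ltn_ord // nth_ord_enum.
by rewrite !E H.
Qed.

Definition codeT n m (e : prf) (M : smatrix m (2 ^ n * m)) : nat :=
  pickle ((m, (prf_tree e, table M)) : nat * (GenTree.tree nat * seq (seq (seq bool)))).

Lemma codeT_inj1 n m m' e e' (M : smatrix m (2 ^ n * m)) (M' : smatrix m' (2 ^ n * m')) :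
  codeT e M = codeT e' M' -> m = m'.
Proof. by move=> /(pcan_inj (@pickleK _)) []. Qed.

Lemma codeT_inj2 n m e e' (M M' : smatrix m (2 ^ n * m)) :
  codeT e M = codeT e' M' -> e = e' /\ M = M'.
Proof.
move=> /(pcan_inj (@pickleK _)) [He Ht]; split; first exact: prf_tree_inj.
exact: table_inj.
Qed.

Definition Req C A0 A1 n (R : nat -> nat -> bool) j c :=
  [/\ (exists q, j <= q /\ cF c q),
      ((forall q, ck c <= q -> cX c q -> R j q) \/ (forall q, ck c <= q -> cX c q -> ~~ R j q)) &
      (forall m e (M : smatrix m (2 ^ n * m)), codeT e M = j -> FR C A0 A1 e M c)].

Lemma dense_all C A0 A1 n (R : nat -> nat -> bool) eR (Hfair : n_fair n C A0 A1)
  (HR : forall i x, eval C eR (pair i x) (R i x)) j c :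
  valid C c -> exists c', valid C c' /\ ext c c' /\ Req C A0 A1 n R j c'.
Proof.
move=> Hv.
have [c1 [Hv1 [He1 HF1]]] : exists c1, valid C c1 /\ ext c c1 /\
    forall m e (M : smatrix m (2 ^ n * m)), codeT e M = j -> FR C A0 A1 e M c1.
  case: (classic (exists m e (M : smatrix m (2 ^ n * m)), codeT e M = j)).
  - move=> [m [e [M HM]]].
    have [c1 [Hv1 [He1 HF1]]] := dense_fair Hfair e M Hv.
    exists c1; split => //; split => // m' e' M' HM'.
    rewrite -HM' in HM; have Hm := codeT_inj1 HM; subst m'.
    have [He' HMM] := codeT_inj2 HM; subst e' M'; exact: HF1.
  - move=> Hn; exists c; split => //; split; first exact: ext_refl.
    by move=> m e M HM; exfalso; apply: Hn; exists m, e, M.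
have [c2 [Hv2 [He2 Hc2]]] := dense_coh j HR Hv1.
have [c3 [Hv3 [He3 Hi3]]] := dense_inf j Hv2.
exists c3; split => //; split; first exact: ext_trans He1 (ext_trans He2 He3).
move: (He3) => [_ _ hx hk].
split => //.
- case: Hc2 => H; [left|right] => q Hq HX; apply: H; [lia|exact: hx|lia|exact: hx].
- move=> m e M HM; apply: FR_ext (ext_trans He2 He3) (HF1 _ _ _ HM).
Qed.

Definition c0 := Cond (fun _ => false) (fun _ => true) 0.

Definition stepc C A0 A1 n R (c : cond) j :=
  epsilon (inhabits c0) (fun c' => valid C c' /\ ext c c' /\ Req C A0 A1 n R j c').

Fixpoint cseq C A0 A1 n R j : cond :=
  if j is j'.+1 then stepc C A0 A1 n R (cseq C A0 A1 n R j') j' else c0.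

Definition Gfin C A0 A1 n R (q : nat) : bool :=
  if excluded_middle_informative (exists j, cF (cseq C A0 A1 n R j) q) then true else false.

Lemma valid_c0 C : valid C c0.
Proof.
split => //=.
- by move=> N; exists N.
- by exists (pConst 1) => q; exact: ev_const.
Qed.

Theorem mainTheorem9 (A0 A1 : str -> Prop) (C : nat -> bool) (R : nat -> nat -> bool) :
  fair C A0 A1 -> unif_computable C R ->
  exists G : nat -> bool, cohesive R G /\ fair (join G C) A0 A1.
Proof.
move=> [n [Hn Hfair]] [eR HR].
set cs := cseq C A0 A1 n R.
have Hstep : forall j, valid C (cs j) /\ (valid C (cs j.+1) /\ ext (cs j) (cs j.+1) /\ Req C A0 A1 n R j (cs j.+1)).
  elim=> [|j [IH1 IH2]].
  - have H0 := valid_c0 C; split => //.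
    apply: (epsilon_spec (inhabits c0) (fun c' => valid C c' /\ ext c0 c' /\ Req C A0 A1 n R 0 c')).
    move: (dense_all Hfair HR 0 H0) => H; exact H.
  - split; first by case: IH2.
    apply: (epsilon_spec (inhabits c0) (fun c' => valid C c' /\ ext (cs j.+1) c' /\ Req C A0 A1 n R j.+1 c')).
    case: IH2 => IH2 _; move: (dense_all Hfair HR j.+1 IH2) => H; exact H.
have Hext : forall i j, i <= j -> ext (cs i) (cs j).
  move=> i j Hij; elim: j Hij => [|j IH] Hij.
  - by move: Hij; rewrite leqn0 => /eqP ->; exact: ext_refl.
  - case: (ltngtP i j.+1) Hij => // Hc _.
    + apply: ext_trans (IH _) (proj1 (proj2 (proj2 (Hstep j)))); lia.
    + rewrite Hc; exact: ext_refl.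
set G := Gfin C A0 A1 n R.
have Hagree : forall j, agrees G (cs j).
  move=> j; split.
  - move=> q Hq; rewrite /G /Gfin; case: excluded_middle_informative => // H.
    by exfalso; apply: H; exists j.
  - move=> q; rewrite /G /Gfin; case: excluded_middle_informative => // [[j' Hj']] _.
    case: (leqP j' j) => Hc.
    + have [a _ _ _] := Hext _ _ Hc; left; exact: a.
    + have [_ b _ _] := Hext j j' (ltnW Hc); exact: b.
exists G; split; first split.
- move=> N; have [_ [_ [_ [[q [Hq HF]] _ _]]]] := Hstep N.
  exists q; split => //; exact: (proj1 (Hagree N.+1)).
- move=> i; have [_ [[h1 h2 _ _] [_ [_ Hc _]]]] := Hstep i.
  case: Hc => Hc; [left|right]; exists (ck (cs i.+1)) => q Hq HG;
  (case: (proj2 (Hagree i.+1) q HG) => [/h1|]; [lia|]); exact: Hc.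
- exists n; split => // m phi M [e He] Hd Hess.
  have [_ [_ [_ [_ _ HF]]]] := Hstep (codeT e M).
  case: (HF m e M erefl Hd) => [[V [HvV [Hdiag Hev]]]|[s Hs]].
  + exists V; split => //; split => //; apply/He; exact: Hev.
  + exfalso; have [V [HvV [Hgt Hphi]]] := Hess s.
    have [y Hy] := (He V).1 Hphi.
    exact: Hs G (Hagree _) V HvV Hgt y Hy.
Qed.
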